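(* Let $c$ be the ellipse $x^2/a_c^2+y^2/b_c^2=1$, $a_c>b_c>0$, and $e$ the confocal ellipse with semiaxes $a_e=\sqrt{a_c^2+k_e}$, $b_e=\sqrt{b_c^2+k_e}$, $k_e>0$. Put $\mathbf t_c(t)=(-a_c\sin t,\,b_c\cos t)$ and $k_h(t)=-\Vert\mathbf t_c(t)\Vert^2$. Let $P_1P_2\dots$ be a billiard in $e$ with caustic $c$, where $P_i=(a_e\cos t_i,\,b_e\sin t_i)$ and $Q_i=(a_c\cos t_i',\,b_c\sin t_i')$ is the point of contact of the side $P_iP_{i+1}$ with $c$. Then \[r_i:=\overline{Q_{i-1}P_i}=\frac{\Vert\mathbf t_c(t_{i-1}')\Vert\,\Vert\mathbf t_c(t_i)\Vert\sqrt{k_e}}{a_cb_c},\qquad l_i:=\overline{P_iQ_i}=\frac{\Vert\mathbf t_c(t_i)\Vert\,\Vert\mathbf t_c(t_i')\Vert\sqrt{k_e}}{a_cb_c}.\] Moreover, the canonical motion of the billiard induces for the side $P_iP_{i+1}$ the instant angular velocity \[\omega_i=\frac{a_cb_c}{\Vert\mathbf t_c(t_i')\Vert}=\frac{a_cb_c}{\sqrt{-k_h(t_i')}}.\]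
   Context: A billiard in $e$ with caustic $c$ is a sequence of points $P_1,P_2,\dots$ on $e$ such that each line $P_iP_{i+1}$ is tangent to $c$ and $P_{i-1}P_i$, $P_iP_{i+1}$ are the two tangents from $P_i$ to $c$; it is traversed counterclockwise. The canonical billiard motion is the motion of the billiard (all vertices staying on $e$ and all sides tangent to $c$) parametrized by a parameter $u$ such that every vertex $P=(a_e\cos t,b_e\sin t)$ moves with $\frac{dt}{du}=\Vert\mathbf t_c(t)\Vert=\sqrt{a_c^2\sin^2t+b_c^2\cos^2t}$, i.e. with velocity vector $\Vert\mathbf t_c(t)\Vert(-a_e\sin t,\,b_e\cos t)$; angular velocities are derivatives with respect to $u$. *)

(* Defs.v *)
From Stdlib Require Import Reals.
From Coquelicot Require Import Coquelicot.
Open Scope R_scope.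

Definition pt2 := (R * R)%type.
Definition vsub (P Q : pt2) : pt2 := (fst P - fst Q, snd P - snd Q).
Definition cross (u v : pt2) : R := fst u * snd v - snd u * fst v.
Definition dist2 (P Q : pt2) : R :=
  sqrt ((fst P - fst Q)^2 + (snd P - snd Q)^2).

Definition ell_pt (a b t : R) : pt2 := (a * cos t, b * sin t).

Definition a_e (ac ke : R) : R := sqrt (ac^2 + ke).
Definition b_e (bc ke : R) : R := sqrt (bc^2 + ke).

Definition t_c (ac bc t : R) : pt2 := (- ac * sin t, bc * cos t).
Definition norm_tc (ac bc t : R) : R :=
  sqrt (ac^2 * (sin t)^2 + bc^2 * (cos t)^2).
Definition k_h (ac bc t : R) : R := - (norm_tc ac bc t)^2.

Definition P_pt (ac bc ke t : R) : pt2 := ell_pt (a_e ac ke) (b_e bc ke) t.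
Definition Q_pt (ac bc t' : R) : pt2 := ell_pt ac bc t'.

(* A billiard in e with caustic c, traversed counterclockwise, given by the
   vertex parameters t : nat -> R (P_0, P_1, ...) and the parameters t' of
   the contact points Q_i of the sides P_i P_{i+1} with c:
   - the line P_i P_{i+1} is tangent to c at Q_i (both P_i and P_{i+1} lie
     on the tangent line of c at Q_i, and P_i <> P_{i+1});
   - P_i P_{i+1} and P_{i+1} P_{i+2} are the two (distinct) tangents from
     P_{i+1} to c, i.e. their contact points differ;
   - counterclockwise traversal: cross(P_i, P_{i+1}) > 0 (the polygon turns
     positively around the common centre). *)
Definition is_billiard (ac bc ke : R) (t t' : nat -> R) : Prop :=
  forall i : nat,
    cross (vsub (P_pt ac bc ke (t i)) (Q_pt ac bc (t' i))) (t_c ac bc (t' i)) = 0 /\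
    cross (vsub (P_pt ac bc ke (t (S i))) (Q_pt ac bc (t' i))) (t_c ac bc (t' i)) = 0 /\
    Q_pt ac bc (t' (S i)) <> Q_pt ac bc (t' i) /\
    cross (P_pt ac bc ke (t i)) (P_pt ac bc ke (t (S i))) > 0.

(* Canonical billiard motion on the open parameter interval ]alpha, beta[:
   T u, T' u are the vertex / contact parameters of the billiard at time u,
   and every vertex moves with dt/du = ||t_c(t)||. *)
Definition canonical_motion (ac bc ke : R) (T T' : R -> nat -> R)
    (alpha beta : R) : Prop :=
  forall u, alpha < u < beta ->
    is_billiard ac bc ke (T u) (T' u) /\
    forall i : nat, is_derive (fun v => T v i) u (norm_tc ac bc (T u i)).

(* Instant angular velocity (w.r.t. u) of a moving line with direction vector
   d(u) = (dx u, dy u): the derivative of its direction angle, i.e.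
   (d x d') / |d|^2. *)
Definition ang_vel (dx dy : R -> R) (u : R) : R :=
  (dx u * Derive dy u - dy u * Derive dx u) / (dx u ^ 2 + dy u ^ 2).

Definition side_ang_vel (ac bc ke : R) (T : R -> nat -> R) (i : nat) (u : R) : R :=
  ang_vel (fun v => fst (vsub (P_pt ac bc ke (T v (S i))) (P_pt ac bc ke (T v i))))
          (fun v => snd (vsub (P_pt ac bc ke (T v (S i))) (P_pt ac bc ke (T v i))))
          u.

(* Main.v *)
Require Import Defs.
From Stdlib Require Import Reals Lra Lia.
From Coquelicot Require Import Coquelicot.
Open Scope R_scope.

Lemma der_cs (a : R) (g : R -> R) (f1 f2 : R -> R) (u d1 d2 : R) :
  is_derive g u (0:R) -> True -> True.
Proof. auto. Qed.

Lemma der_cos2 (a : R) (f1 f2 : R -> R) (u d1 d2 : R) :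
  is_derive f1 u d1 -> is_derive f2 u d2 ->
  is_derive (fun v => a*cos(f2 v) - a*cos(f1 v)) u (a*(d2*(-sin(f2 u))) - a*(d1*(-sin(f1 u)))).
Proof. intros H1 H2.
  apply (is_derive_minus (fun v => a*cos(f2 v)) (fun v => a*cos(f1 v))).
  - apply is_derive_scal. apply (is_derive_comp cos f2 u). apply is_derive_cos. exact H2.
  - apply is_derive_scal. apply (is_derive_comp cos f1 u). apply is_derive_cos. exact H1.
Qed.

Lemma der_sin2 (a : R) (f1 f2 : R -> R) (u d1 d2 : R) :
  is_derive f1 u d1 -> is_derive f2 u d2 ->
  is_derive (fun v => a*sin(f2 v) - a*sin(f1 v)) u (a*(d2*cos(f2 u)) - a*(d1*cos(f1 u))).
Proof. intros H1 H2.
  apply (is_derive_minus (fun v => a*sin(f2 v)) (fun v => a*sin(f1 v))).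
  - apply is_derive_scal. apply (is_derive_comp sin f2 u). apply is_derive_sin. exact H2.
  - apply is_derive_scal. apply (is_derive_comp sin f1 u). apply is_derive_sin. exact H1.
Qed.

Lemma sq_eq_nonneg (L R0 : R) : L^2 = R0^2 -> 0 <= L*R0 -> L = R0.
Proof. intros H1 H2.
assert (H: (L-R0)*(L+R0) = 0) by (rewrite <- (Rminus_diag_eq _ _ H1); ring).
destruct (Rmult_integral _ _ H) as [H3|H3]; [lra|].
assert (R0 = -L) by lra. subst R0. nra. Qed.

Lemma core (ac bc ke ae be c s c' s' : R) :
  ac > 0 -> bc > 0 -> ke > 0 -> ae > 0 -> be > 0 ->
  ae^2 = ac^2 + ke -> be^2 = bc^2 + ke -> c^2 + s^2 = 1 -> c'^2+s'^2 = 1 ->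
  (ae*c - ac*c')*(bc*c') - (be*s - bc*s')*(-ac*s') = 0 ->
  let l := (be*s - bc*s')*c'/bc - (ae*c - ac*c')*s'/ac in
  (ae*c - ac*c' = l*(-ac*s') /\ be*s - bc*s' = l*(bc*c')) /\
  (l*(ac*bc))^2 = ke*(ac^2*s^2+bc^2*c^2) /\
  sqrt(ac^2*s^2+bc^2*c^2) * ((-ac*s')*(be*c) - (bc*c')*(-ae*s)) =
    l*(ac*bc)*sqrt(ac^2*s'^2+bc^2*c'^2).
Proof.
intros Hac Hbc Hke Hae Hbe Ha Hb Hc Hc' H l.
assert (Hdy: (be*s - bc*s')*(ac*s') = -((ae*c-ac*c')*(bc*c'))) by lra.
assert (H1: ae*c - ac*c' = l*(-ac*s')).
{ replace (l*(-ac*s')) with (-((be*s-bc*s')*(ac*s'))*c'/bc + (ae*c-ac*c')*s'^2)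
    by (unfold l; field; lra).
  rewrite Hdy.
  replace (- - ((ae * c - ac * c') * (bc * c')) * c' / bc + (ae * c - ac * c') * s' ^ 2)
    with ((ae*c - ac*c')*(c'^2+s'^2)) by (field; lra).
  rewrite Hc'; ring. }
assert (Hdx: (ae*c-ac*c')*(bc*c') = -((be*s - bc*s')*(ac*s'))) by lra.
assert (H2: be*s - bc*s' = l*(bc*c')).
{ replace (l*(bc*c')) with ((be*s-bc*s')*c'^2 - ((ae*c-ac*c')*(bc*c'))*s'/ac)
    by (unfold l; field; lra).
  rewrite Hdx.
  replace ((be * s - bc * s') * c' ^ 2 - - ((be * s - bc * s') * (ac * s')) * s' / ac)
    with ((be*s - bc*s')*(c'^2+s'^2)) by (field; lra).
  rewrite Hc'; ring. }
assert (Hlam: l*(ac*bc) = ac*be*s*c' - bc*ae*c*s').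
{ replace (l*(ac*bc)) with (l*(ac*bc)*(c'^2+s'^2)) by (rewrite Hc'; ring).
  replace (ac*be*s*c' - bc*ae*c*s') with (ac*c'*(be*s - bc*s') - bc*s'*(ae*c - ac*c')) by ring.
  rewrite H1, H2. ring. }
assert (Hm: ae*bc*c*c' + ac*be*s*s' = ac*bc).
{ replace (ac*bc) with (ac*bc*(c'^2+s'^2)) by (rewrite Hc'; ring). lra. }
assert (HL: (l*(ac*bc))^2 = ke*(ac^2*s^2+bc^2*c^2)).
{ rewrite Hlam.
  assert (E: (ac*be*s*c' - bc*ae*c*s')^2 = (ae^2*bc^2*c^2 + ac^2*be^2*s^2)*(c'^2+s'^2) - (ae*bc*c*c' + ac*be*s*s')^2) by ring.
  rewrite E, Hm, Hc', Ha, Hb.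
  replace (s^2) with (1-c^2) by lra. ring. }
split; [split; assumption|split; [exact HL|]].
assert (Hx: ae*c = ac*c' - l*ac*s') by lra.
assert (Hy: be*s = bc*s' + l*bc*c') by lra.
set (X := (-ac*s')*(be*c) - (bc*c')*(-ae*s)).
set (A' := ac^2*s'^2*be^2 + bc^2*c'^2*ae^2).
set (C' := ac^2*c'^2*be^2 + bc^2*s'^2*ae^2 - ae^2*be^2).
assert (EG: ae*be*X = A'*l + c'*s'*(bc^2*ae^2 - ac^2*be^2)).
{ replace (ae*be*X) with (-ac*s'*be^2*(ae*c) + bc*c'*ae^2*(be*s)) by (unfold X; ring).
  rewrite Hx, Hy. unfold A'. ring. }
assert (EQ: A'*l^2 + 2*c'*s'*(bc^2*ae^2 - ac^2*be^2)*l + C' = 0).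
{ replace 0 with ((ae*c)^2*be^2 + (be*s)^2*ae^2 - ae^2*be^2*(c^2+s^2)) by ring.
  rewrite Hc.
  rewrite Hx, Hy. unfold A', C'. ring. }
assert (EC: - C' = ke*(c'^2*be^2 + s'^2*ae^2)).
{ unfold C'. replace (ae^2*be^2) with (ae^2*be^2*(c'^2+s'^2)) by (rewrite Hc'; ring).
  rewrite Ha, Hb. ring. }
assert (HA: 0 <= A') by (unfold A'; replace (ac^2*s'^2*be^2 + bc^2*c'^2*ae^2) with ((ac*s'*be)^2 + (bc*c'*ae)^2) by ring; apply Rplus_le_le_0_compat; apply pow2_ge_0).
assert (HCp: 0 <= - C') by (rewrite EC; replace (c'^2*be^2 + s'^2*ae^2) with ((c'*be)^2 + (s'*ae)^2) by ring; apply Rmult_le_pos; [lra|apply Rplus_le_le_0_compat; apply pow2_ge_0]).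
assert (HXl: 0 <= X * l).
{ assert (E2: 2*(ae*be*X)*l = A'*l^2 - C' + (A'*l^2 + 2*c'*s'*(bc^2*ae^2 - ac^2*be^2)*l + C'))
    by (rewrite EG; ring).
  rewrite EQ in E2.
  assert (0 <= 2*(ae*be)*(X*l)) by nra.
  assert (0 < 2*(ae*be)) by nra. nra. }
assert (HX2: (ae*be*X)^2 = ae^2*be^2*(ke*(ac^2*s'^2+bc^2*c'^2))).
{ rewrite EG.
  replace ((A' * l + c' * s' * (bc ^ 2 * ae ^ 2 - ac ^ 2 * be ^ 2)) ^ 2)
    with (A'*(A'*l^2 + 2*c'*s'*(bc^2*ae^2 - ac^2*be^2)*l + C')
          + (c'^2*s'^2*(bc^2*ae^2 - ac^2*be^2)^2 - A'*C')) by ring.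
  rewrite EQ. unfold A', C'.
  replace (c'^2*s'^2*(bc^2*ae^2 - ac^2*be^2)^2 -
     (ac ^ 2 * s' ^ 2 * be ^ 2 + bc ^ 2 * c' ^ 2 * ae ^ 2) *
     (ac ^ 2 * c' ^ 2 * be ^ 2 + bc ^ 2 * s' ^ 2 * ae ^ 2 - ae ^ 2 * be ^ 2))
   with (- (ac^2*be^2)*(bc^2*ae^2)*(c'^2+s'^2)^2 + ae^2*be^2*(ac^2*be^2*s'^2 + bc^2*ae^2*c'^2)) by ring.
  rewrite Hc'.
  replace (ae^2*be^2*(ac^2*be^2*s'^2 + bc^2*ae^2*c'^2)) with
     (ae^2*be^2*(ac^2*be^2*s'^2 + bc^2*ae^2*c'^2 - ac^2*bc^2*(c'^2+s'^2)) + ae^2*be^2*ac^2*bc^2) by (rewrite Hc'; ring).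
  rewrite Ha, Hb. ring. }
assert (HX: X^2 = ke*(ac^2*s'^2+bc^2*c'^2)).
{ assert (0 < ae^2*be^2) by (apply Rmult_lt_0_compat; apply pow_lt; lra).
  apply Rmult_eq_reg_l with (ae^2*be^2); [|lra].
  rewrite <- HX2. ring. }
assert (HN: 0 <= ac^2*s^2+bc^2*c^2) by nra.
assert (HN': 0 <= ac^2*s'^2+bc^2*c'^2) by nra.
apply sq_eq_nonneg.
- rewrite Rpow_mult_distr, HX, (Rpow_mult_distr (l*(ac*bc))), HL, !pow2_sqrt by assumption. ring.
- replace (sqrt (ac ^ 2 * s ^ 2 + bc ^ 2 * c ^ 2) * X * (l * (ac * bc) * sqrt (ac ^ 2 * s' ^ 2 + bc ^ 2 * c' ^ 2)))
   with ((sqrt (ac ^ 2 * s ^ 2 + bc ^ 2 * c ^ 2) * sqrt (ac ^ 2 * s' ^ 2 + bc ^ 2 * c' ^ 2)) * (ac*bc) * (X*l)) by ring.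
  apply Rmult_le_pos; [apply Rmult_le_pos|exact HXl].
  + apply Rmult_le_pos; apply sqrt_pos.
  + nra.
Qed.

Lemma final_alg (ac bc ae be c1 s1 c2 s2 c' s' l1 l2 N1 N2 N' : R) :
  ac > 0 -> bc > 0 -> N' > 0 -> N'^2 = ac^2*s'^2+bc^2*c'^2 -> l1 <> l2 ->
  ae*c1 - ac*c' = l1*(-ac*s') -> be*s1 - bc*s' = l1*(bc*c') ->
  ae*c2 - ac*c' = l2*(-ac*s') -> be*s2 - bc*s' = l2*(bc*c') ->
  N1 * ((-ac*s')*(be*c1) - (bc*c')*(-ae*s1)) = l1*(ac*bc)*N' ->
  N2 * ((-ac*s')*(be*c2) - (bc*c')*(-ae*s2)) = l2*(ac*bc)*N' ->
  ((ae*c2 - ae*c1) * (be*(N2*c2) - be*(N1*c1)) - (be*s2 - be*s1) * (ae*(N2*(-s2)) - ae*(N1*(-s1))))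
    / ((ae*c2 - ae*c1)^2 + (be*s2 - be*s1)^2) = ac*bc/N'.
Proof. intros Hac Hbc HN HN2 Hl A1 B1 A2 B2 X1 X2.
assert (Ex: ae*c2 - ae*c1 = (l2-l1)*(-ac*s')) by lra.
assert (Ey: be*s2 - be*s1 = (l2-l1)*(bc*c')) by lra.
replace ((ae*c2 - ae*c1) * (be*(N2*c2) - be*(N1*c1)) - (be*s2 - be*s1) * (ae*(N2*(-s2)) - ae*(N1*(-s1))))
  with ((l2-l1)*(N2 * ((-ac*s')*(be*c2) - (bc*c')*(-ae*s2)) - N1 * ((-ac*s')*(be*c1) - (bc*c')*(-ae*s1))))
  by (rewrite Ex, Ey; ring).
rewrite X1, X2, Ex, Ey.
replace (((l2 - l1) * (- ac * s')) ^ 2 + ((l2 - l1) * (bc * c')) ^ 2) with ((l2-l1)^2 * N'^2)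
  by (rewrite HN2; ring).
assert (l2 - l1 <> 0) by lra.
field. split; lra.
Qed.

Lemma ae_facts (ac ke : R) : ke > 0 -> a_e ac ke > 0 /\ (a_e ac ke)^2 = ac^2 + ke.
Proof. intros Hk. unfold a_e. split.
- apply sqrt_lt_R0. nra.
- apply pow2_sqrt. nra.
Qed.
Lemma be_facts (bc ke : R) : ke > 0 -> b_e bc ke > 0 /\ (b_e bc ke)^2 = bc^2 + ke.
Proof. intros Hk. unfold b_e. split.
- apply sqrt_lt_R0. nra.
- apply pow2_sqrt. nra.
Qed.

Lemma core_app (ac bc ke t t' : R) : ac > 0 -> bc > 0 -> ke > 0 ->
  cross (vsub (P_pt ac bc ke t) (Q_pt ac bc t')) (t_c ac bc t') = 0 ->
  let ae := a_e ac ke in let be := b_e bc ke in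
  exists l,
  (ae*cos t - ac*cos t' = l*(-ac*sin t') /\ be*sin t - bc*sin t' = l*(bc*cos t')) /\
  (l*(ac*bc))^2 = ke*(ac^2*sin t^2+bc^2*cos t^2) /\
  norm_tc ac bc t * ((-ac*sin t')*(be*cos t) - (bc*cos t')*(-ae*sin t)) =
    l*(ac*bc)*norm_tc ac bc t'.
Proof. intros Hac Hbc Hke H ae be.
destruct (ae_facts ac ke Hke) as [Hae Ha]. destruct (be_facts bc ke Hke) as [Hbe Hb].
unfold cross, vsub, P_pt, Q_pt, ell_pt, t_c in H. cbn [fst snd] in H.
pose proof (core ac bc ke ae be (cos t) (sin t) (cos t') (sin t') Hac Hbc Hke Hae Hbe Ha Hb) as C.
assert (Hc: cos t ^2 + sin t^2 = 1) by (pose proof (sin2_cos2 t); unfold Rsqr in *; lra).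
assert (Hc': cos t' ^2 + sin t'^2 = 1) by (pose proof (sin2_cos2 t'); unfold Rsqr in *; lra).
specialize (C Hc Hc' H). cbv zeta in C.
eexists. unfold norm_tc. exact C.
Qed.

Lemma Npos (ac bc t : R) : ac > bc -> bc > 0 -> norm_tc ac bc t > 0.
Proof. intros Hab Hb. unfold norm_tc. apply sqrt_lt_R0.
pose proof (sin2_cos2 t). unfold Rsqr in *.
assert (bc^2 <= ac^2) by (simpl; nra).
assert (0 < bc^2) by (apply pow_lt; lra).
assert (0 <= sin t ^2) by apply pow2_ge_0.
assert (ac^2*sin t^2 + bc^2*cos t^2 >= bc^2*(sin t^2 + cos t^2)) by nra.
replace (sin t^2 + cos t^2) with 1 in H3 by (simpl; lra).
lra. Qed.

Lemma Nsq (ac bc t : R) : (norm_tc ac bc t)^2 = ac^2*sin t^2+bc^2*cos t^2.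
Proof. unfold norm_tc. apply pow2_sqrt.
assert (0 <= ac^2*sin t^2) by (replace (ac^2*sin t^2) with ((ac*sin t)^2) by ring; apply pow2_ge_0).
assert (0 <= bc^2*cos t^2) by (replace (bc^2*cos t^2) with ((bc*cos t)^2) by ring; apply pow2_ge_0).
lra. Qed.

Lemma distPQ (ac bc ke t t' : R) : ac > bc -> ac > 0 -> bc > 0 -> ke > 0 ->
  cross (vsub (P_pt ac bc ke t) (Q_pt ac bc t')) (t_c ac bc t') = 0 ->
  dist2 (P_pt ac bc ke t) (Q_pt ac bc t') =
    norm_tc ac bc t * norm_tc ac bc t' * sqrt ke / (ac * bc).
Proof. intros Hab Hac Hbc Hke H.
destruct (core_app ac bc ke t t' Hac Hbc Hke H) as [l [[E1 E2] [E3 _]]].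
unfold dist2, P_pt, Q_pt, ell_pt. cbn [fst snd].
rewrite E1, E2.
pose proof (Npos ac bc t Hab Hbc). pose proof (Npos ac bc t' Hab Hbc).
assert (Hs: 0 < sqrt ke) by (apply sqrt_lt_R0; lra).
assert (0 <= norm_tc ac bc t * norm_tc ac bc t' * sqrt ke / (ac * bc)).
{ apply Rlt_le. apply Rdiv_lt_0_compat; [|nra].
  apply Rmult_lt_0_compat; [apply Rmult_lt_0_compat|]; assumption. }
rewrite <- (sqrt_pow2 (norm_tc ac bc t * norm_tc ac bc t' * sqrt ke / (ac * bc))) by assumption.
f_equal.
assert (Hk: sqrt ke ^2 = ke) by (apply pow2_sqrt; lra).
replace ((norm_tc ac bc t * norm_tc ac bc t' * sqrt ke / (ac * bc)) ^ 2)
  with ((norm_tc ac bc t)^2 * (norm_tc ac bc t')^2 * (sqrt ke)^2 / (ac*bc)^2) by (field; lra).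
rewrite Hk, !Nsq.
replace ((ac ^ 2 * sin t ^ 2 + bc ^ 2 * cos t ^ 2) * (ac ^ 2 * sin t' ^ 2 + bc ^ 2 * cos t' ^ 2) * ke)
  with (ke * (ac ^ 2 * sin t ^ 2 + bc ^ 2 * cos t ^ 2) * (ac ^ 2 * sin t' ^ 2 + bc ^ 2 * cos t' ^ 2)) by ring.
rewrite <- E3. field. lra.
Qed.

Lemma dist2_sym (P Q : pt2) : dist2 P Q = dist2 Q P.
Proof. unfold dist2. f_equal. ring. Qed.

Theorem lemma1 (ac bc ke : R) (Hab : ac > bc) (Hb : bc > 0) (Hke : ke > 0) :
  (forall t t' : nat -> R, is_billiard ac bc ke t t' ->
     forall i : nat,
       (1 <= i)%nat ->
       dist2 (Q_pt ac bc (t' (i - 1)%nat)) (P_pt ac bc ke (t i)) =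
         norm_tc ac bc (t' (i - 1)%nat) * norm_tc ac bc (t i) * sqrt ke / (ac * bc)) /\
  (forall t t' : nat -> R, is_billiard ac bc ke t t' ->
     forall i : nat,
       dist2 (P_pt ac bc ke (t i)) (Q_pt ac bc (t' i)) =
         norm_tc ac bc (t i) * norm_tc ac bc (t' i) * sqrt ke / (ac * bc)) /\
  (forall (T T' : R -> nat -> R) (alpha beta u : R),
     canonical_motion ac bc ke T T' alpha beta -> alpha < u < beta ->
     forall i : nat,
       side_ang_vel ac bc ke T i u = ac * bc / norm_tc ac bc (T' u i) /\
       side_ang_vel ac bc ke T i u = ac * bc / sqrt (- k_h ac bc (T' u i))).
Proof.
assert (Hac : ac > 0) by lra.
split; [|split].
- intros t t' Hbil i Hi.
  destruct i as [|j]; [lia|].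
  replace (S j - 1)%nat with j by lia.
  rewrite dist2_sym.
  destruct (Hbil j) as [_ [H2 _]].
  rewrite (distPQ ac bc ke (t (S j)) (t' j) Hab Hac Hb Hke H2). unfold Rdiv; ring.
- intros t t' Hbil i.
  destruct (Hbil i) as [H1 _].
  apply distPQ; assumption.
- intros T T' alpha beta u Hcm Hu i.
  destruct (Hcm u Hu) as [Hbil Hder].
  destruct (Hbil i) as [H1 [H2 [_ H4]]].
  set (t1 := T u i) in *. set (t2 := T u (S i)) in *. set (t' := T' u i) in *.
  assert (Hang: side_ang_vel ac bc ke T i u = ac * bc / norm_tc ac bc t').
  { destruct (core_app ac bc ke t1 t' Hac Hb Hke H1) as [l1 [[A1 B1] [_ X1]]].
    destruct (core_app ac bc ke t2 t' Hac Hb Hke H2) as [l2 [[A2 B2] [_ X2]]].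
    unfold side_ang_vel, ang_vel.
    unfold vsub, P_pt, ell_pt. cbn [fst snd].
    assert (D1: Derive (fun v : R => a_e ac ke * cos (T v (S i)) - a_e ac ke * cos (T v i)) u
       = a_e ac ke * (norm_tc ac bc t2 * - sin t2) - a_e ac ke * (norm_tc ac bc t1 * - sin t1)).
    { apply is_derive_unique. apply (der_cos2 (a_e ac ke) (fun v => T v i) (fun v => T v (S i))); apply Hder. }
    assert (D2: Derive (fun v : R => b_e bc ke * sin (T v (S i)) - b_e bc ke * sin (T v i)) u
       = b_e bc ke * (norm_tc ac bc t2 * cos t2) - b_e bc ke * (norm_tc ac bc t1 * cos t1)).
    { apply is_derive_unique. apply (der_sin2 (b_e bc ke) (fun v => T v i) (fun v => T v (S i))); apply Hder. }
    rewrite D1, D2.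
    fold t1 t2.
    apply final_alg with (s' := sin t') (c' := cos t') (l1 := l1) (l2 := l2); try assumption.
    + apply Npos; assumption.
    + rewrite Nsq. ring.
    + intro El. subst l2.
      unfold cross, P_pt, ell_pt in H4. cbn [fst snd] in H4.
      assert (a_e ac ke * cos t1 = a_e ac ke * cos t2) by lra.
      assert (b_e bc ke * sin t1 = b_e bc ke * sin t2) by lra.
      assert (Z: a_e ac ke * cos t1 * (b_e bc ke * sin t2) - b_e bc ke * sin t1 * (a_e ac ke * cos t2) = 0).
      { replace (a_e ac ke * cos t1 * (b_e bc ke * sin t2)) with ((a_e ac ke * cos t1) * (b_e bc ke * sin t2)) by ring.
        replace (b_e bc ke * sin t1 * (a_e ac ke * cos t2)) with ((b_e bc ke * sin t1) * (a_e ac ke * cos t2)) by ring.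
        rewrite H, H0. ring. }
      lra. }
  split; [exact Hang|].
  rewrite Hang. unfold k_h. f_equal.
  rewrite Ropp_involutive. rewrite sqrt_pow2; [reflexivity|].
  apply Rlt_le, Npos; assumption.
Qed.
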